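(* Let $\{W_t\}_{t\ge0}$ be a standard Brownian motion, let $\{\rho_s\}_{s\ge0}$ be an initial term-structure density ($\rho_s=-\partial_sP_{0s}>0$, $\int_0^\infty\rho_s\,\mathrm ds=1$), and let $\{\phi_s\}_{s\ge0}$ be a deterministic function (the functional model parameter). Consider the Flesaker–Hughston model based on the GBM family $M_{ts}=\exp(\phi_sW_t-\tfrac12\phi_s^2t)$, with bond prices $$P_{tT}=\frac{\int_T^\infty\rho_s\exp(\phi_sW_t-\frac12\phi_s^2t)\,\mathrm ds}{\int_t^\infty\rho_s\exp(\phi_sW_t-\frac12\phi_s^2t)\,\mathrm ds}.$$ Define $$\Phi_{tT}=\frac{\int_T^\infty\phi_s\rho_s\exp(\phi_sW_t-\frac12\phi_s^2t)\,\mathrm ds}{\int_T^\infty\rho_s\exp(\phi_sW_t-\frac12\phi_s^2t)\,\mathrm ds},\qquad \Phi_{tt}=\lim_{s\to t}\Phi_{st},$$ the bond volatility $\Omega_{tT}=\Phi_{tT}-\Phi_{tt}$, the market price of risk $\lambda_t=-\Phi_{tt}$, and the risk premium $\lambda_t\Omega_{tT}=\Phi_{tt}(\Phi_{tt}-\Phi_{tT})$. If either $\{\phi_t\}$ is positive and decreasing, or $\{\phi_t\}$ is negative and increasing, then the risk premium $\lambda_t\Omega_{tT}$ is positive (for $0<t<T$). *)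

(* Defs.v *)
From HB Require Import structures.
From mathcomp Require Import all_boot all_order all_algebra.
From mathcomp Require Import all_classical all_reals all_analysis.
Set Implicit Arguments. Unset Strict Implicit. Unset Printing Implicit Defensive.
Import Order.TTheory GRing.Theory Num.Theory.
Import numFieldNormedType.Exports.
Local Open Scope classical_set_scope.
Local Open Scope ring_scope.

Section FH.
Variable R : realType.

(* GBM family M_{ts} = exp(phi_s W_t - phi_s^2 t / 2), with w = W_t *)
Definition Mgbm (phi : R -> R) (t w s : R) : R :=
  expR (phi s * w - phi s ^+ 2 * t / 2).

Definition denFH (rho phi : R -> R) (t w T : R) : R :=
  Rintegral (@lebesgue_measure R) `[T, +oo[%classic
    (fun s => rho s * Mgbm phi t w s).

Definition numFH (rho phi : R -> R) (t w T : R) : R :=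
  Rintegral (@lebesgue_measure R) `[T, +oo[%classic
    (fun s => phi s * rho s * Mgbm phi t w s).

Definition bondP (rho phi : R -> R) (t w T : R) : R :=
  denFH rho phi t w T / denFH rho phi t w t.

Definition PhiFH (rho phi : R -> R) (t w T : R) : R :=
  numFH rho phi t w T / denFH rho phi t w T.

Definition OmegaFH (rho phi : R -> R) (t w T : R) : R :=
  PhiFH rho phi t w T - PhiFH rho phi t w t.

Definition lambdaFH (rho phi : R -> R) (t w : R) : R :=
  - PhiFH rho phi t w t.

End FH.

(* Main.v *)
Require Import Defs.
From HB Require Import structures.
From mathcomp Require Import all_boot all_order all_algebra.
From mathcomp Require Import all_classical all_reals all_analysis.
From mathcomp Require Import measurable_realfun ring lra.
Import Order.TTheory GRing.Theory Num.Theory.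
Import numFieldNormedType.Exports.
Local Open Scope classical_set_scope.
Local Open Scope ring_scope.
Set Implicit Arguments. Unset Strict Implicit.

Lemma phi_meas (R : realType) (phi : R -> R)
  (phi_dec : forall s u, 0 <= s -> s < u -> phi u < phi s) :
  measurable_fun (`[0, +oo[%classic : set (measurableTypeR R)) phi.
Proof.
apply: (@eq_measurable_fun _ _ _ _ _ (phi \o (fun x => Num.max x 0))).
  move=> x /[!inE] /=; rewrite in_itv andbT => x0.
  by rewrite max_l.
have : measurable_fun (`[0, +oo[%classic : set R) (phi \o (fun x => Num.max x 0)).
  apply: nonincreasing_measurable => // x y xy /=.
  have a0 : 0 <= Num.max x 0 by rewrite le_max lexx orbT.
  have : Num.max x 0 <= Num.max y 0 by apply: le_max2.
  rewrite le_eqVlt => /orP[/eqP -> //|lt].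
  exact/ltW/phi_dec.
by [].
Qed.

Lemma M_bound (R : realType) (phi : R -> R) t w s : 0 < t ->
  Mgbm phi t w s <= expR (w ^+ 2 / (2 * t)).
Proof.
move=> t0; rewrite /Mgbm ler_expR.
have H : 0 <= (phi s * t - w) ^+ 2 by apply: sqr_ge0.
rewrite -subr_ge0.
have -> : w ^+ 2 / (2 * t) - (phi s * w - phi s ^+ 2 * t / 2) =
   (phi s * t - w) ^+ 2 / (2 * t).
  by field; rewrite gt_eqF.
by rewrite divr_ge0 // mulr_ge0 // ltW.
Qed.

Lemma M_meas (R : realType) (phi : R -> R) t w
  (mphi : measurable_fun (`[0, +oo[%classic : set (measurableTypeR R)) phi) :
  measurable_fun (`[0, +oo[%classic : set (measurableTypeR R)) (Mgbm phi t w).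
Proof.
rewrite /Mgbm.
apply: measurableT_comp => //.
apply: measurable_funB.
  by apply: measurable_funM => //.
apply: measurable_funM => //; apply: measurable_funM => //.
exact: measurable_funX.
Qed.

Lemma ints (R : realType) (rho phi : R -> R)
  (rho_pos : forall s, 0 <= s -> 0 < rho s)
  (rho_int : (@lebesgue_measure R).-integrable `[0, +oo[%classic
               (fun s => (rho s)%:E))
  (B : R) (phiB : forall s, 0 <= s -> `|phi s| <= B)
  (mphi : measurable_fun (`[0, +oo[%classic : set (measurableTypeR R)) phi)
  t w (ht : 0 < t) :
  (@lebesgue_measure R).-integrable `[0, +oo[%classic
     (EFin \o (fun s => rho s * Mgbm phi t w s)) /\
  (@lebesgue_measure R).-integrable `[0, +oo[%classic
     (EFin \o (fun s => phi s * rho s * Mgbm phi t w s)).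
Proof.
have mrho : measurable_fun (`[0, +oo[%classic : set (measurableTypeR R)) rho.
  by apply/measurable_EFinP; exact: (measurable_int _ rho_int).
have mM := M_meas t w mphi.
set C := expR (w ^+ 2 / (2 * t)).
have Mpos s : 0 < Mgbm phi t w s by rewrite /Mgbm expR_gt0.
have rpos s : (`[0, +oo[%classic : set R) s -> 0 <= rho s.
  by rewrite /= in_itv /= andbT => /rho_pos/ltW.
have Ix_ge0 s : (`[0, +oo[%classic : set R) s -> 0 <= s.
  by rewrite /= in_itv /= andbT.
split.
  apply: (@le_integrable _ _ _ (@lebesgue_measure R) _ _ _ (fun s => (C%:E * (rho s)%:E)%E)) => //.
  - by apply/measurable_EFinP; exact: measurable_funM.
  - move=> x Ix /=; rewrite lee_fin.
    have h1 := rpos _ Ix; have h2 : Mgbm phi t w x <= C := M_bound phi w x ht; have h3 := Mpos x.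
    have h4 : 0 <= C by rewrite expR_ge0.
    rewrite !ger0_norm ?mulr_ge0 //; [nra|exact: ltW].
  - exact: integrableZl.
apply: (@le_integrable _ _ _ (@lebesgue_measure R) _ _ _ (fun s => ((B * C)%:E * (rho s)%:E)%E)) => //.
- by apply/measurable_EFinP; apply: measurable_funM => //; exact: measurable_funM.
- move=> x Ix /=; rewrite lee_fin.
  have h1 := rpos _ Ix; have h2 : Mgbm phi t w x <= C := M_bound phi w x ht; have h3 := Mpos x.
  have h4 : 0 <= C by rewrite expR_ge0.
  have h5 := phiB _ (Ix_ge0 _ Ix).
  rewrite !normrM (ger0_norm h1) (ger0_norm h4) (ger0_norm (ltW h3)).
  rewrite -mulrA -mulrA; apply: ler_pM => //;
    [by rewrite mulr_ge0 // ltW | exact: le_trans h5 (ler_norm _) | by rewrite mulrC ler_wpM2r].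
- exact: integrableZl.
Qed.
Lemma Rint_gt0 (R : realType) (D : set R) (f : R -> R) :
  measurable (D : set (measurableTypeR R)) -> (@lebesgue_measure R D != 0)%E ->
  (@lebesgue_measure R).-integrable D (EFin \o f) ->
  (forall x, D x -> 0 < f x) ->
  0 < Rintegral (@lebesgue_measure R) D f.
Proof.
move=> mD D0 intf fpos.
rewrite lt_def Rintegral_ge0 ?andbT; last by move=> x /fpos/ltW.
apply/negP => /eqP I0.
have fin := integrable_fin_num mD intf.
have : (\int[lebesgue_measure]_(x in D) `|(EFin \o f) x| = 0)%E.
  transitivity (\int[lebesgue_measure]_(x in D) (EFin \o f) x)%E.
    apply: eq_integral => x /[!inE] Dx /=.
    by rewrite ger0_norm // ltW // fpos.
  by rewrite -(fineK fin); move: I0; rewrite /Rintegral => ->.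
move/(ae_eq_integral_abs _ mD) => H.
have [N [mN N0 sub]] := H (measurable_int _ intf).
move/eqP: D0; apply; apply: (subset_measure0 _ _ _ N0) => // x Dx.
apply: sub => /(_ Dx) /= [] fx0.
by move: (fpos x Dx); rewrite fx0 ltxx.
Qed.

Lemma split_itv (R : realType) (F : R -> R) (t T : R) : t < T ->
  (@lebesgue_measure R).-integrable `[t, +oo[%classic (EFin \o F) ->
  Rintegral (@lebesgue_measure R) `[t, +oo[%classic F =
  Rintegral (@lebesgue_measure R) `[t, T[%classic F +
  Rintegral (@lebesgue_measure R) `[T, +oo[%classic F.
Proof.
move=> tT iF.
have E : (`[t, +oo[%classic : set R) = `[t, T[%classic `|` `[T, +oo[%classic.
  apply/seteqP; split => x /=; rewrite !in_itv /= ?andbT.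
    move=> tx; case: (ltP x T) => xT; [left|right] => //.
    by rewrite tx.
  case=> [/andP[-> //]|Tx]; exact: le_trans (ltW tT) Tx.
rewrite E Rintegral_setU //; first by rewrite -E.
apply/disj_set2P; apply/seteqP; split => x //=.
rewrite !in_itv /= andbT => -[/andP[_ xT] Tx].
by move: (lt_le_trans xT Tx); rewrite ltxx.
Qed.

Lemma mu_itv_neq0 (R : realType) (a b : R) : a < b ->
  (@lebesgue_measure R (`[a, b[%classic) != 0)%E.
Proof.
move=> ab; rewrite lebesgue_measure_itv /= lte_fin ab.
by rewrite -EFinD eqe subr_eq0 gt_eqF.
Qed.

Lemma mu_itvy_neq0 (R : realType) (a : R) :
  (@lebesgue_measure R (`[a, +oo[%classic) != 0)%E.
Proof. by rewrite lebesgue_measure_itv /= ltry. Qed.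

Lemma intZ (R : realType) (D : set (measurableTypeR R)) (g : R -> R) (c : R) :
  measurable D ->
  (@lebesgue_measure R).-integrable D (EFin \o g) ->
  (@lebesgue_measure R).-integrable D (EFin \o (fun s => c * g s)).
Proof.
move=> mD ig; apply: (eq_integrable mD _ _ _ (integrableZl mD c ig)) => x _.
by rewrite /= EFinM.
Qed.

Lemma intB (R : realType) (D : set (measurableTypeR R)) (f g : R -> R) :
  measurable D ->
  (@lebesgue_measure R).-integrable D (EFin \o f) ->
  (@lebesgue_measure R).-integrable D (EFin \o g) ->
  (@lebesgue_measure R).-integrable D (EFin \o (fun s => f s - g s)).
Proof.
move=> mD iF iG; apply: (eq_integrable mD _ _ _ (integrableB mD iF iG)) => x _.
by rewrite /= EFinB.
Qed.

Lemma alg (R : realFieldType) (N1 NT D1 DT c : R) : 0 < DT -> 0 < D1 ->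
  NT <= c * DT -> c * D1 < N1 -> 0 < N1 -> 0 <= NT ->
  0 < - ((N1 + NT) / (D1 + DT)) * (NT / DT - (N1 + NT) / (D1 + DT)).
Proof.
move=> DT0 D10 h1 h2 N10 NT0.
have S0 : 0 < D1 + DT by rewrite addr_gt0.
rewrite mulNr -mulrN opprB.
have -> : (N1 + NT) / (D1 + DT) - NT / DT =
   (N1 * DT - NT * D1) / ((D1 + DT) * DT).
  by field; rewrite ?gt_eqF.
apply: mulr_gt0; first by apply: divr_gt0 => //; lra.
apply: divr_gt0; last exact: mulr_gt0.
rewrite subr_gt0; nra.
Qed.

Lemma core (R : realType) (rho phi : R -> R)
  (rho_pos : forall s, 0 <= s -> 0 < rho s)
  (rho_int : (@lebesgue_measure R).-integrable `[0, +oo[%classic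
               (fun s => (rho s)%:E))
  (phi_pos : forall s, 0 <= s -> 0 < phi s)
  (phi_dec : forall s u, 0 <= s -> s < u -> phi u < phi s)
  (t T w : R) (ht : 0 < t) (htT : t < T) :
  0 < lambdaFH rho phi t w * OmegaFH rho phi t w T.
Proof.
have mphi := phi_meas phi_dec.
have phiB : forall s, 0 <= s -> `|phi s| <= phi 0.
  move=> s s0; rewrite ger0_norm; last exact: ltW (phi_pos _ s0).
  move: s0; rewrite le_eqVlt => /orP[/eqP<-//|s0]; exact: ltW (phi_dec _ _ (lexx _) s0).
have [ig ifn] := ints rho_pos rho_int phiB mphi w ht.
have sub a : 0 <= a -> (`[a, +oo[%classic : set (measurableTypeR R)) `<=` `[0, +oo[%classic.
  by move=> a0 x /=; rewrite !in_itv /= !andbT; exact: le_trans.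
have subA : (`[t, T[%classic : set (measurableTypeR R)) `<=` `[0, +oo[%classic.
  move=> x /=; rewrite !in_itv /= andbT => /andP[tx _]; exact: le_trans (ltW ht) tx.
have t0 : 0 <= t by exact: ltW.
have T0 : 0 <= T by exact: ltW (lt_trans ht htT).
have mI a : measurable (`[a, +oo[%classic : set (measurableTypeR R)) by [].
have mA : measurable (`[t, T[%classic : set (measurableTypeR R)) by [].
have igt := integrableS (mI 0) (mI t) (sub _ t0) ig.
have igT := integrableS (mI 0) (mI T) (sub _ T0) ig.
have igA := integrableS (mI 0) mA subA ig.
have ift := integrableS (mI 0) (mI t) (sub _ t0) ifn.
have ifT := integrableS (mI 0) (mI T) (sub _ T0) ifn.
have ifA := integrableS (mI 0) mA subA ifn.
have Mpos s : 0 < Mgbm phi t w s by rewrite /Mgbm expR_gt0.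
have gpos s : t <= s -> 0 < rho s * Mgbm phi t w s.
  by move=> ts; rewrite mulr_gt0 // rho_pos // (le_trans t0).
have fpos s : t <= s -> 0 < phi s * rho s * Mgbm phi t w s.
  by move=> ts; rewrite -mulrA mulr_gt0 ?gpos // phi_pos // (le_trans t0).
set c := phi T.
have DTpos : 0 < Rintegral (@lebesgue_measure R) `[T, +oo[%classic
                   (fun s => rho s * Mgbm phi t w s).
  apply: (Rint_gt0 _ (mu_itvy_neq0 T) igT) => //.
  by move=> x /=; rewrite in_itv /= andbT => Tx; apply: gpos (le_trans (ltW htT) Tx).
have D1pos : 0 < Rintegral (@lebesgue_measure R) `[t, T[%classic
                   (fun s => rho s * Mgbm phi t w s).
  apply: (Rint_gt0 _ (mu_itv_neq0 htT) igA) => //.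
  by move=> x /=; rewrite in_itv /= => /andP[tx _]; apply: gpos.
have NTle : Rintegral (@lebesgue_measure R) `[T, +oo[%classic
                   (fun s => phi s * rho s * Mgbm phi t w s) <=
            c * Rintegral (@lebesgue_measure R) `[T, +oo[%classic
                   (fun s => rho s * Mgbm phi t w s).
  rewrite -RintegralZl //; apply: le_Rintegral => //; first exact: intZ (mI T) igT.
  move=> x /=; rewrite in_itv /= andbT => Tx.
  have tx : t <= x by exact: le_trans (ltW htT) Tx.
  rewrite -mulrA; apply: ler_wpM2r; first exact/ltW/gpos.
  move: Tx; rewrite le_eqVlt => /orP[/eqP Tx|Tx]; first by rewrite -Tx.
  exact: ltW (phi_dec _ _ T0 Tx).
have N1gt : c * Rintegral (@lebesgue_measure R) `[t, T[%classic
                   (fun s => rho s * Mgbm phi t w s) <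
            Rintegral (@lebesgue_measure R) `[t, T[%classic
                   (fun s => phi s * rho s * Mgbm phi t w s).
  rewrite -subr_gt0 -RintegralZl // -RintegralB //; last exact: intZ mA igA.
  apply: (Rint_gt0 _ (mu_itv_neq0 htT)) => //.
    by apply: intB => //; exact: intZ mA igA.
  move=> x /=; rewrite in_itv /= => /andP[tx xT].
  rewrite subr_gt0 -mulrA ltr_pM2r ?gpos //.
  by apply: phi_dec => //; exact: le_trans t0 tx.
have N1pos : 0 < Rintegral (@lebesgue_measure R) `[t, T[%classic
                   (fun s => phi s * rho s * Mgbm phi t w s).
  apply: (Rint_gt0 _ (mu_itv_neq0 htT) ifA) => //.
  by move=> x /=; rewrite in_itv /= => /andP[tx _]; apply: fpos.
have NTge0 : 0 <= Rintegral (@lebesgue_measure R) `[T, +oo[%classic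
                   (fun s => phi s * rho s * Mgbm phi t w s).
  apply: Rintegral_ge0 => x /=; rewrite in_itv /= andbT => Tx.
  by apply/ltW/fpos; exact: le_trans (ltW htT) Tx.
have eD := split_itv htT igt.
have eN := split_itv htT ift.
rewrite /lambdaFH /OmegaFH /PhiFH /numFH /denFH eD eN.
exact: (alg DTpos D1pos NTle N1gt N1pos NTge0).
Qed.

Lemma alg2 (R : realFieldType) (a b c d : R) :
  0 < - (a / b) * (c / d - a / b) ->
  0 < - (- a / b) * (- c / d - - a / b).
Proof.
have -> : - (- a / b) * (- c / d - - a / b) = - (a / b) * (c / d - a / b).
  by ring.
by [].
Qed.

Unset Implicit Arguments.
Set Strict Implicit.

Theorem proposition2 (R : realType) (Omega : Type) (W : R -> Omega -> R)
  (rho phi : R -> R)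
  (rho_pos : forall s, 0 <= s -> 0 < rho s)
  (rho_int : (@lebesgue_measure R).-integrable `[0, +oo[%classic
               (fun s => (rho s)%:E))
  (rho_tot : Rintegral (@lebesgue_measure R) `[0, +oo[%classic rho = 1)
  (phi_mon :
     ((forall s, 0 <= s -> 0 < phi s) /\
      (forall s u, 0 <= s -> s < u -> phi u < phi s))
     \/
     ((forall s, 0 <= s -> phi s < 0) /\
      (forall s u, 0 <= s -> s < u -> phi s < phi u)))
  (t T : R) (ht : 0 < t) (htT : t < T) (omega : Omega) :
  0 < lambdaFH rho phi t (W t omega) * OmegaFH rho phi t (W t omega) T.
Proof.
set w := W t omega.
case: phi_mon => [[pp pd]|[pn pi]]; first exact: core.
pose psi := fun s => - phi s.
have psi_pos s : 0 <= s -> 0 < psi s by move=> s0; rewrite /psi oppr_gt0 pn.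
have psi_dec s u : 0 <= s -> s < u -> psi u < psi s.
  by move=> s0 su; rewrite /psi ltrN2 pi.
have H := core rho_pos rho_int psi_pos psi_dec (- w) ht htT.
have mpsi := phi_meas psi_dec.
have psiB : forall s, 0 <= s -> `|psi s| <= psi 0.
  move=> s s0; rewrite ger0_norm; last exact: ltW (psi_pos _ s0).
  move: s0; rewrite le_eqVlt => /orP[/eqP<-//|s0]; exact: ltW (psi_dec _ _ (lexx _) s0).
have [_ ifn] := ints rho_pos rho_int psiB mpsi (- w) ht.
have eM s : Mgbm psi t (- w) s = Mgbm phi t w s.
  by rewrite /Mgbm /psi mulrNN sqrrN.
have eden x : denFH rho psi t (- w) x = denFH rho phi t w x.
  by rewrite /denFH; apply: eq_Rintegral => s _; rewrite eM.
have enum x : 0 <= x -> numFH rho phi t w x = - numFH rho psi t (- w) x.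
  move=> x0; rewrite /numFH -mulN1r -RintegralZl //; last first.
    apply: (integrableS _ _ _ ifn) => //.
    by move=> y /=; rewrite !in_itv /= !andbT; exact: le_trans.
  apply: eq_Rintegral => s _; rewrite eM /psi.
  by rewrite mulN1r !mulNr opprK.
have t0 : 0 <= t by exact: ltW.
have T0 : 0 <= T by exact: ltW (lt_trans ht htT).
move: H; rewrite /lambdaFH /OmegaFH /PhiFH !eden (enum t t0) (enum T T0).
exact: alg2.
Qed.
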